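(* Under the hypotheses in the context (decomposition of $\mathcal X$ over $A$, $g\in\mathcal G_s$, integer $T>0$, and $\operatorname{argmin}_{u\in\mathcal U} J^*_{t+1}(Ax+Bu)\cap[\bigoplus_{i\in\mathcal I}\mathcal E_i]\neq\emptyset$ for all $x\in\mathcal X$, $t\in\{0,\dots,T-1\}$), for every $i\in\mathcal I$ the restriction of the optimal cost $J^*$ of $(A,B,g,T)$ to $\mathcal X_i$ equals the optimal cost $\bar J_i^*$ of the subproblem $(A,B|_{\mathcal E_i},g,T)$.
   Context: Let $\mathcal F$ be a field and $\mathcal X,\mathcal U$ finite-dimensional vector spaces over $\mathcal F$. Let $A:\mathcal X\to\mathcal X$ and $B:\mathcal U\to\mathcal X$ be linear maps with $B$ injective, and let $g:\mathcal X\to\mathbb R_{\ge0}$ satisfy $g(x)=0\iff x=0$. Standing assumption: all minima appearing below are attained. For the finite-horizon problem $(A,B,g,T)$ associated with $x_{t+1}=Ax_t+Bu_t$ (cost $\sum_{t=0}^Tg(x_t)$ minimized over $u_0,\dots,u_{T-1}\in\mathcal U$), the cost-to-go functions are $J^*_T=g$ and $J^*_t(x)=g(x)+\min_{u\in\mathcal U}J^*_{t+1}(Ax+Bu)$; the optimal cost is $J^*=J^*_0$. A decomposition of $\mathcal X$ over $A$ is a direct sum $\mathcal X=\mathcal X_1\oplus\cdots\oplus\mathcal X_r$ with $r>1$ and $A\mathcal X_i\subseteq\mathcal X_i$ for all $i\in\mathcal I=\{1,\dots,r\}$; $\rho_i:\mathcal X\to\mathcal X_i$ is the projection along the other summands.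 $\mathcal G_s$ is the set of $h:\mathcal X\to\mathbb R_{\ge0}$ with $h(x)=\sum_i h(\rho_i(x))$ for all $x$. $\mathcal E_i=\{u\in\mathcal U:Bu\in\mathcal X_i\}$. Subproblem $(A,B|_{\mathcal E_i},g,T)$: system $x_{i,t+1}=Ax_{i,t}+B\bar u_{i,t}$ with states in $\mathcal X_i$ and inputs in $\mathcal E_i$, cost $\sum_{t=0}^Tg(x_{i,t})$; its optimal cost is $\bar J_i^*$ (equivalently $\bar J^*_{i,0}$ where $\bar J^*_{i,T}=g|_{\mathcal X_i}$ and $\bar J^*_{i,t}(z)=g(z)+\min_{u\in\mathcal E_i}\bar J^*_{i,t+1}(Az+Bu)$). *)

(* Defs.v *)
From HB Require Import structures.
From mathcomp Require Import all_boot all_order all_algebra.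
From Stdlib Require Import ClassicalEpsilon.
Set Implicit Arguments. Unset Strict Implicit. Unset Printing Implicit Defensive.
Import Order.TTheory GRing.Theory Num.Theory.
Local Open Scope ring_scope.

Section Defs.
Variables (F : fieldType) (X U : vectType F) (R : realFieldType).

Definition is_argmin (S : U -> Prop) (f : U -> R) (u : U) : Prop :=
  S u /\ forall v, S v -> f u <= f v.

(* min_{u in S} f u  (the value is only meaningful when the minimum is attained;
   otherwise it is an arbitrary default 0) *)
Definition minval (S : U -> Prop) (f : U -> R) : R :=
  match excluded_middle_informative (exists u, is_argmin S f u) with
  | left H => f (proj1_sig (constructive_indefinite_description _ H))
  | right _ => 0
  end.

Fixpoint ctg (A : 'End(X)) (B : 'Hom(U, X)) (g : X -> R) (S : U -> Prop)
  (k : nat) (x : X) : R :=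
  match k with
  | 0 => g x
  | k'.+1 => g x + minval S (fun u => ctg A B g S k' (A x + B u))
  end.

Definition Jstar A B g (T t : nat) : X -> R := ctg A B g (fun _ => True) (T - t).

Definition Eset (B : 'Hom(U, X)) (Xi : {vspace X}) : U -> Prop :=
  fun u => B u \in Xi.

Definition Jbar A B g (Xi : {vspace X}) (T t : nat) : X -> R :=
  ctg A B g (Eset B Xi) (T - t).

Definition rho r (Xs : 'I_r -> {vspace X}) (i : 'I_r) : 'End(X) :=
  sumv_pi (\sum_(j < r) Xs j)%VS i.

Definition decomposition (A : 'End(X)) r (Xs : 'I_r -> {vspace X}) : Prop :=
  [/\ (1 < r)%N, directv (\sum_(j < r) Xs j)%VS,
      (\sum_(j < r) Xs j)%VS = fullv
    & forall i, (A @: Xs i <= Xs i)%VS].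

Definition in_Gs r (Xs : 'I_r -> {vspace X}) (g : X -> R) : Prop :=
  (forall x, 0 <= g x) /\ forall x, g x = \sum_(i < r) g (rho Xs i x).

Definition Esum (B : 'Hom(U, X)) r (Xs : 'I_r -> {vspace X}) : {vspace U} :=
  (\sum_(i < r) (B @^-1: Xs i))%VS.

End Defs.

(* Main.v *)
Require Import Defs.
From HB Require Import structures.
From mathcomp Require Import all_boot all_order all_algebra.
From Stdlib Require Import ClassicalEpsilon.
Import Order.TTheory GRing.Theory Num.Theory.
Local Open Scope ring_scope.

Section Aux.
Variables (F : fieldType) (X U : vectType F) (R : realFieldType).

Lemma minval_argmin (S : U -> Prop) (f : U -> R) u :
  is_argmin S f u -> minval S f = f u.
Proof.
move=> Hu; rewrite /minval; case: excluded_middle_informative => [H|[]]; last by exists u.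
case: constructive_indefinite_description => c [Sc Hc] /=.
case: Hu => Su Hu; apply/le_anti; rewrite Hc // Hu //.
Qed.

Lemma minval_ge0 (S : U -> Prop) (f : U -> R) :
  (forall u, 0 <= f u) -> 0 <= minval S f.
Proof.
move=> H; rewrite /minval; case: excluded_middle_informative => // ?.
Qed.

Lemma ctg_ge0 (A : 'End(X)) (B : 'Hom(U, X)) (g : X -> R) S :
  (forall x, 0 <= g x) -> forall k x, 0 <= ctg A B g S k x.
Proof.
move=> g0; elim=> [|k IH] x /=; first exact: g0.
by rewrite addr_ge0 // minval_ge0.
Qed.

Lemma ctg_zero (A : 'End(X)) (B : 'Hom(U, X)) (g : X -> R) (S : U -> Prop) :
  (forall x, 0 <= g x) -> g 0 = 0 -> S 0 -> forall k, ctg A B g S k 0 = 0.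
Proof.
move=> g0 gz S0; elim=> [|k IH] //=.
rewrite gz add0r (minval_argmin _ _ 0).
  by rewrite !linear0 add0r IH.
split=> // v _; rewrite !linear0 !add0r IH; exact: ctg_ge0.
Qed.

End Aux.

Theorem corollary2 (F : fieldType) (X U : vectType F) (R : realFieldType)
  (A : 'End(X)) (B : 'Hom(U, X)) (g : X -> R) (r : nat)
  (Xs : 'I_r -> {vspace X}) (T : nat) :
  injective B ->
  (forall x, g x = 0 <-> x = 0) ->
  decomposition A Xs ->
  in_Gs Xs g ->
  (0 < T)%N ->
  (* standing assumption: the minima defining J^*_t are attained *)
  (forall (t : nat) (x : X), (t < T)%N ->
     exists u, is_argmin (fun _ => True) (fun u => Jstar A B g T t.+1 (A x + B u)) u) ->
  (* standing assumption: the minima defining \bar J^*_{i,t} are attained *)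
  (forall (i : 'I_r) (t : nat) (z : X), (t < T)%N -> z \in Xs i ->
     exists u, is_argmin (Eset B (Xs i))
                 (fun u => Jbar A B g (Xs i) T t.+1 (A z + B u)) u) ->
  (* argmin_u J^*_{t+1}(Ax+Bu) meets \bigoplus_i E_i *)
  (forall (t : nat) (x : X), (t < T)%N ->
     exists u, is_argmin (fun _ => True) (fun u => Jstar A B g T t.+1 (A x + B u)) u
               /\ u \in Esum B Xs) ->
  forall (i : 'I_r) (z : X), z \in Xs i ->
    Jstar A B g T 0 z = Jbar A B g (Xs i) T 0 z.
Proof.
move=> _ gz [_ dir full Ainv] [g0 gs] _ _ HJbar HJs.
have g00 : g 0 = 0 by apply/gz.
have puniq : forall ys : 'I_r -> X, (forall j, ys j \in Xs j) ->
    forall k, rho Xs k (\sum_j ys j) = ys k.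
  move=> ys Hys k.
  have Hd := dir; move/directv_sum_unique: Hd => Hd.
  have := Hd (fun j => rho Xs j (\sum_j ys j)) ys.
  rewrite sumv_pi_sum; last by rewrite full memvf.
  rewrite eqxx => /(_ (fun j _ => memv_sum_pi _ _ _) (fun j _ => Hys j)).
  by move=> /esym/forall_inP/(_ k isT)/eqP.
have psum : forall x, \sum_j rho Xs j x = x.
  by move=> x; rewrite sumv_pi_sum // full memvf.
have pmem : forall x j, rho Xs j x \in Xs j by move=> x j; apply: memv_sum_pi.
have pin : forall j y k, y \in Xs j -> rho Xs k y = if k == j then y else 0.
  move=> j y k yj.
  have E : y = \sum_l (if l == j then y else 0) by rewrite -big_mkcond big_pred1_eq.
  by rewrite {1}E puniq // => l; case: eqP => [->|_] //; rewrite mem0v.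
have pA : forall x k, rho Xs k (A x) = A (rho Xs k x).
  move=> x k; rewrite -{1}(psum x) linear_sum puniq // => j.
  by apply: (subvP (Ainv j)); apply: memv_img.
have pB : forall ws : 'I_r -> U, (forall j, B (ws j) \in Xs j) ->
    forall k, rho Xs k (B (\sum_j ws j)) = B (ws k).
  by move=> ws Hw k; rewrite linear_sum puniq.
set cF := ctg A B g (fun _ => True).
set cE := fun j => ctg A B g (Eset B (Xs j)).
have main : forall k, (k <= T)%N -> forall x, cF k x = \sum_j cE j k (rho Xs j x).
  elim=> [|k IH] kT x; first by rewrite /cF /cE /= gs.
  have tT : (T - k.+1 < T)%N by rewrite ltn_subrL (leq_trans _ kT).
  have ek : (T - (T - k.+1).+1)%N = k.
    by rewrite subnSK // subKn // ltnW.
  have [us [[_ Hus] uE]] := HJs _ x tT.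
  have Hv : forall j, exists v, is_argmin (Eset B (Xs j))
      (fun v => cE j k (A (rho Xs j x) + B v)) v.
    by move=> j; have := HJbar j _ (rho Xs j x) tT (pmem x j); rewrite /Jbar ek.
  pose v j := proj1_sig (constructive_indefinite_description _ (Hv j)).
  have vP : forall j, is_argmin _ _ (v j) :=
    fun j => proj2_sig (constructive_indefinite_description _ (Hv j)).
  rewrite /cF /= (@minval_argmin _ _ _ _ _ us); last first.
    by split=> // w _; have := Hus w I; rewrite /Jstar ek.
  rewrite /cE /=.
  under eq_bigr => j _ do rewrite (@minval_argmin _ _ _ _ _ _ (vP j)).
  rewrite big_split /= -gs; congr (_ + _).
  have ltk : (k <= T)%N by apply: ltnW.
  have phi : forall u, ctg A B g (fun=> True) k (A x + B u)
      = \sum_j cE j k (A (rho Xs j x) + rho Xs j (B u)).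
    by move=> u; rewrite -/cF IH // ; apply: eq_bigr => j _; rewrite -pA -linearD.
  case/memv_sumP: uE Hus => ws Hws -> Hus.
  have Hws' : forall j, B (ws j) \in Xs j by move=> j; rewrite memv_preim Hws.
  apply/le_anti/andP; split.
    move: (Hus (\sum_j v j) I); rewrite /Jstar ek => H; apply: (le_trans H).
    rewrite phi le_eqVlt; apply/orP; left; apply/eqP/eq_bigr => j _.
    by rewrite pB // => l; case: (vP l).
  rewrite phi; apply: ler_sum => j _; rewrite pB //.
  by case: (vP j) => _; apply; apply: Hws'.
move=> i z zi.
rewrite /Jstar /Jbar !subn0 -/cF main // (bigD1 i) //= big1 ?addr0.
  by rewrite (pin i z i zi) eqxx.
move=> j ji; rewrite (pin i z j zi) (negPf ji) /cE ctg_zero //.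
by rewrite /Eset linear0 mem0v.
Qed.
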